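(* Let $w\ge 2$, $h\ge 3$, $1\le m<w$, and $G=P_w(U)\sqcap C_h$ where $U=\{1,2,\dots,m\}$ or $U=\{w-m+1,\dots,w\}$. (1) If $h\le 2m$, then $Z(G)\le h$. (2) If $2m<h<4m$, then $Z(G)\le 2m$. (3) If $h>4m$, then $Z(G)\le\lceil h/2\rceil$.
   Context: All graphs are finite, simple and undirected. Zero forcing: given a graph $G$ and a set $S\subseteq V(G)$ of initially filled vertices, the color change rule says that if a filled vertex $v$ has exactly one unfilled neighbor $u$, then $v$ forces $u$ to become filled. $S$ is a zero forcing set if repeatedly applying this rule eventually fills every vertex of $G$. The zero forcing number $Z(G)$ is the minimum cardinality of a zero forcing set of $G$. The path $P_n$ has vertex set $\{1,\dots,n\}$ and edges $\{k,k+1\}$ for $1\le k\le n-1$; the cycle $C_n$ ($n\ge3$) has vertex set $\{1,\dots,n\}$ and edges $\{k,k+1\}$ for $1\le k\le n-1$ together with $\{n,1\}$. Generalized hierarchical product: for graphs $W,H$ and $U\subseteq V(W)$ (the root set), $W(U)\sqcap H$ is the graph with vertex set $V(W)\times V(H)$ in which $(x_1,y_1)$ and $(x_2,y_2)$ are adjacent iff either ($x_1=x_2\in U$ and $y_1y_2\in E(H)$) or ($y_1=y_2$ and $x_1x_2\in E(W)$). *)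

(* Defs.v *)
From mathcomp Require Import all_boot all_order.
Set Implicit Arguments. Unset Strict Implicit. Unset Printing Implicit Defensive.

(* A simple graph on a finType T is given by its (symmetric, irreflexive)
   adjacency relation e. *)

(* Vertex 1..n of P_n / C_n is represented by the ordinal 0..n-1. *)
Definition path_rel (n : nat) : rel 'I_n :=
  fun i j => (i.+1 == j :> nat) || (j.+1 == i :> nat).

(* cycle C_n (meaningful for n >= 3): k ~ k+1 mod n *)
Definition cycle_rel (n : nat) : rel 'I_n :=
  fun i j => (i.+1 %% n == j :> nat) || (j.+1 %% n == i :> nat).

Definition hprod (A B : finType) (eW : rel A) (U : {set A}) (eH : rel B)
  : rel (A * B)%type :=
  fun p q => [&& p.1 == q.1, p.1 \in U & eH p.2 q.2]
          || ((p.2 == q.2) && eW p.1 q.1).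

Section ZeroForcing.
Variables (T : finType) (e : rel T).

Definition forced (S : {set T}) : {set T} :=
  [set u | [exists v, [&& v \in S, e v u, u \notin S &
                      [forall x, e v x ==> (x \in S) || (x == u)]]]].

Definition force_step (S : {set T}) : {set T} := S :|: forced S.

(* final coloring obtained by repeatedly applying the color change rule
   (#|T| rounds suffice; each non-final round adds a vertex) *)
Definition zf_closure (S : {set T}) : {set T} := iter #|T| force_step S.

Definition zero_forcing_set (S : {set T}) : bool := zf_closure S == setT.

(* zero forcing number: minimum size of a zero forcing set
   (setT is always one, so the default #|T| is never the only bound) *)
Definition Z : nat :=
  \big[minn/#|T|]_(S : {set T} | zero_forcing_set S) #|S|.
End ZeroForcing.

(* Main.v *)
Require Import Defs.
From mathcomp Require Import all_boot all_order.
From mathcomp Require Import zify.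
Set Implicit Arguments. Unset Strict Implicit. Unset Printing Implicit Defensive.

Lemma closure_ok (T : finType) (e : rel T) (S : {set T}) :
  (forall C : {set T}, S \subset C -> forced e C \subset C -> C = setT) ->
  zero_forcing_set e S.
Proof.
move=> H; rewrite /zero_forcing_set /zf_closure.
have P : forall k, S \subset iter k (force_step e) S /\
   (iter k (force_step e) S = setT \/ k <= #|iter k (force_step e) S|).
  elim=> [|k [sub IH]] /=; first by split; [exact: subxx | right].
  set A := iter k _ S in sub IH *.
  have subA : A \subset force_step e A by rewrite /force_step subsetUl.
  split; first exact: subset_trans sub subA.
  case: IH => [->|lek]; first by left; rewrite /force_step setTU.
  case: (boolP (forced e A \subset A)) => cl.
    by left; rewrite /force_step (setUidPl cl); exact: H.
  right; have: A \proper force_step e A.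
    rewrite properEneq subA andbT; apply/negP => /eqP eqA.
    by apply: (negP cl); rewrite {2}eqA /force_step subsetUr.
  by move/proper_card => lt; exact: leq_ltn_trans lek lt.
case: (P #|T|) => _ [->|le]; first by [].
by rewrite eqEcard subsetT cardsT le.
Qed.

Lemma bigmin_le (I : finType) (P : pred I) (F : I -> nat) x0 j :
  P j -> \big[minn/x0]_(i | P i) F i <= F j.
Proof.
move=> Pj; rewrite unlock /reducebig.
have : j \in index_enum I by rewrite mem_index_enum.
elim: (index_enum I) => [|a s IH] //=; rewrite inE => /orP [/eqP <-|js].
  by rewrite Pj geq_minl.
case: (P a); last exact: IH js.
by rewrite geq_min IH ?orbT.
Qed.

Lemma Z_le (T : finType) (e : rel T) (S : {set T}) :
  zero_forcing_set e S -> Z e <= #|S|.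
Proof. by move=> H; rewrite /Z; apply: (bigmin_le (P := zero_forcing_set e)). Qed.

Section Geo.
Variables (w h m : nat) (orient : bool).
Hypotheses (hw : 2 <= w) (hh : 3 <= h) (hm : 0 < m) (hmw : m < w).

Definition fx x := if orient then x else w.-1 - x.
Definition Uo : {set 'I_w} :=
  if orient then [set i : 'I_w | i < m] else [set i : 'I_w | w - m <= i].
Definition E := hprod (@path_rel w) Uo (@cycle_rel h).

Lemma w0 : 0 < w. Proof. lia. Qed.
Lemma h0 : 0 < h. Proof. lia. Qed.

Definition V x t : 'I_w * 'I_h :=
  (Ordinal (ltn_pmod (fx x) w0), Ordinal (ltn_pmod t h0)).

Lemma fx_lt x : x < w -> fx x < w.
Proof. rewrite /fx; case: orient; lia. Qed.

Lemma V1 x t : x < w -> val (V x t).1 = fx x.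
Proof. by move=> xw /=; rewrite modn_small ?fx_lt. Qed.

Lemma V2 x t : val (V x t).2 = t %% h.
Proof. by []. Qed.

Lemma Vh x t : V x (t + h) = V x t.
Proof. by rewrite /V; congr pair; apply: val_inj; rewrite /= modnDr. Qed.

Lemma Vmod x t : V x (t %% h) = V x t.
Proof. by rewrite /V; congr pair; apply: val_inj; rewrite /= modn_mod. Qed.

Lemma Vdn x t : V x (t.+1 + h.-1) = V x t.
Proof. by rewrite addSnnS prednK ?h0 // Vh. Qed.

Lemma Vpair (a : 'I_w) (b : 'I_h) x t :
  x < w -> (a : nat) = fx x -> b = (V x t).2 -> (a, b) = V x t.
Proof. by move=> xw ea ->; congr pair; apply: val_inj; rewrite /= modn_small ?fx_lt. Qed.

Lemma inU x t : x < w -> ((V x t).1 \in Uo) = (x < m).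
Proof.
move=> xw; rewrite /Uo; have := V1 t xw; rewrite /fx.
by case: orient => e; rewrite inE e; apply/idP/idP; lia.
Qed.

Lemma modS a : (a %% h).+1 %% h = a.+1 %% h.
Proof. by rewrite -addn1 modnDml addn1. Qed.

Lemma adjR x t : x.+1 < w -> E (V x t) (V x.+1 t).
Proof.
move=> xw; apply/orP; right; apply/andP; split; first by [].
rewrite /path_rel !V1 //; last exact: ltnW.
rewrite /fx; case: orient; apply/orP; [left | right]; apply/eqP; lia.
Qed.

Lemma adjL x t : 0 < x -> x < w -> E (V x t) (V x.-1 t).
Proof.
move=> x0 xw; apply/orP; right; apply/andP; split; first by [].
rewrite /path_rel !V1 //; last exact: (leq_ltn_trans (leq_pred x) xw).
rewrite /fx; case: orient; apply/orP; [right | left]; apply/eqP; lia.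
Qed.

Lemma adjU x t : x < m -> E (V x t) (V x t.+1).
Proof.
move=> xm; apply/orP; left; rewrite eqxx inU /=; last lia.
by rewrite xm /cycle_rel /= modS eqxx.
Qed.

Lemma adjD x t : x < m -> E (V x t) (V x (t + h.-1)).
Proof.
move=> xm; apply/orP; left; rewrite eqxx inU /=; last lia.
rewrite xm /cycle_rel /=; apply/orP; right.
by rewrite modS -addSn addSnnS prednK ?h0 // modnDr.
Qed.

Lemma nbr x t y : x < w -> E (V x t) y ->
  [\/ 0 < x /\ y = V x.-1 t, x.+1 < w /\ y = V x.+1 t,
      x < m /\ y = V x t.+1 | x < m /\ y = V x (t + h.-1)].
Proof.
move=> xw; case: y => a b; rewrite /E /hprod /=.
case/orP => [/and3P [/eqP ea iU cyc] | /andP [/eqP eb pr]].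
  have xm : x < m by rewrite -(inU t xw).
  move: cyc; rewrite /cycle_rel /= -ea => /orP [/eqP c1 | /eqP c2].
    apply: Or43; split => //; congr pair; apply: val_inj => /=.
    by rewrite -c1 modS.
  apply: Or44; split => //; congr pair; apply: val_inj => /=.
  have bh := ltn_ord b.
  by rewrite -modnDml -c2 modnDml addSnnS prednK ?h0 // modnDr modn_small.
move: pr; rewrite /path_rel V1 // -eb.
have ah := ltn_ord a.
rewrite /fx; case Eo: orient => /orP [/eqP c | /eqP c].
- apply: Or42; split; first lia.
  by apply: Vpair => //; [lia | rewrite /fx Eo; lia].
- apply: Or41; split; first lia.
  by apply: Vpair => //; [lia | rewrite /fx Eo; lia].
- apply: Or41; split; first lia.
  by apply: Vpair => //; [lia | rewrite /fx Eo; lia].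
- apply: Or42; split; first lia.
  by apply: Vpair => //; [lia | rewrite /fx Eo; lia].
Qed.

Lemma surjV (p : 'I_w * 'I_h) : exists x t, x < w /\ t < h /\ p = V x t.
Proof.
case: p => a b; exists (fx a), b; have aw := ltn_ord a.
have fw : fx a < w by apply: fx_lt.
do 2! split => //.
by apply: Vpair => //; [rewrite /fx; case: orient; lia|
   apply: val_inj; rewrite /= modn_small].
Qed.

Lemma force (C : {set 'I_w * 'I_h}) x t u :
  forced E C \subset C -> x < w -> V x t \in C -> E (V x t) u ->
  (0 < x -> V x.-1 t \in C \/ V x.-1 t = u) ->
  (x.+1 < w -> V x.+1 t \in C \/ V x.+1 t = u) ->
  (x < m -> V x t.+1 \in C \/ V x t.+1 = u) ->
  (x < m -> V x (t + h.-1) \in C \/ V x (t + h.-1) = u) -> u \in C.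
Proof.
move=> cl xw vC eu H1 H2 H3 H4.
apply: contraT => uC.
have: u \in forced E C; last by move/(subsetP cl); rewrite (negbTE uC).
rewrite inE; apply/existsP; exists (V x t).
rewrite vC eu uC /=; apply/forallP => y; apply/implyP => ey.
case: (nbr xw ey) => [[p ->]|[p ->]|[p ->]|[p ->]].
- by case: (H1 p) => ->; rewrite ?eqxx ?orbT.
- by case: (H2 p) => ->; rewrite ?eqxx ?orbT.
- by case: (H3 p) => ->; rewrite ?eqxx ?orbT.
- by case: (H4 p) => ->; rewrite ?eqxx ?orbT.
Qed.



Section Closed.
Variable C : {set 'I_w * 'I_h}.
Hypothesis cl : forced E C \subset C.

Definition full t := forall x, x < w -> V x t \in C.

Lemma tailL t : V w.-1 t \in C -> forall x, m.-1 <= x -> x < w -> V x t \in C.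
Proof.
move=> H.
suff K : forall d x, m.-1 <= x -> x < w -> w.-1 - x <= d -> V x t \in C.
  by move=> x lo hi; apply: (K (w.-1 - x)).
elim=> [|d IH] x lo hi le.
  by have -> : x = w.-1 by lia.
case: (leqP (w.-1 - x) d) => [le'|lt]; first exact: IH.
have x1w : x.+1 < w by lia.
apply: (@force C x.+1 t) => //.
- by apply: IH => //; lia.
- by apply: adjL.
- by move=> _; right.
- by move=> p; left; apply: IH => //; lia.
- by move=> p; lia.
- by move=> p; lia.
Qed.

Lemma UpU t : full t -> full t.+1 -> forall x, x < m -> V x t.+2 \in C.
Proof.
move=> F0 F1 x xm; have xw : x < w by lia.
apply: (@force C x t.+1) => //.
- exact: F1.
- exact: adjU.
- by move=> p; left; apply: F1; lia.
- by move=> p; left; apply: F1.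
- by move=> _; right.
- by move=> _; left; rewrite Vdn; apply: F0.
Qed.

Lemma DownU t : full t.+1 -> full t.+2 -> forall x, x < m -> V x t \in C.
Proof.
move=> F1 F2 x xm; have xw : x < w by lia.
rewrite -(Vdn x t).
apply: (@force C x t.+1) => //.
- exact: F1.
- exact: adjD.
- by move=> p; left; apply: F1; lia.
- by move=> p; left; apply: F1.
- by move=> _; left; apply: F2.
- by move=> _; right.
Qed.

Lemma Sweep t : full t -> full t.+2 -> (forall x, x < m -> V x t.+1 \in C) ->
  full t.+1.
Proof.
move=> F0 F2 A.
suff K : forall n x, x <= n -> x < w -> V x t.+1 \in C.
  by move=> x xw; apply: (K x).
elim=> [|n IH] x xn xw; first by apply: A; lia.
case: (leqP x n) => [le|lt]; first exact: IH.
case: (ltnP x m) => [xm|xm]; first exact: A.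
have -> : x = n.+1 by lia.
apply: (@force C n t.+1) => //.
- lia.
- by apply: IH => //; lia.
- by apply: adjR; lia.
- by move=> p; left; apply: IH; lia.
- by move=> _; right.
- by move=> _; left; apply: F2; lia.
- by move=> _; left; rewrite Vdn; apply: F0; lia.
Qed.

Lemma Up t : full t -> full t.+1 -> V w.-1 t.+2 \in C -> full t.+2.
Proof.
move=> F0 F1 T x xw; case: (ltnP x m) => xm; first exact: UpU.
by apply: tailL => //; lia.
Qed.

Lemma Down t : full t.+1 -> full t.+2 -> V w.-1 t \in C -> full t.
Proof.
move=> F1 F2 T x xw; case: (ltnP x m) => xm; first exact: DownU.
by apply: tailL => //; lia.
Qed.

Lemma Step t : full t -> full t.+1 -> V w.-1 t.+3 \in C -> full t.+2 /\ full t.+3.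
Proof.
move=> F0 F1 T.
have A := UpU F0 F1.
have B : forall x, x < m.-1 -> V x t.+3 \in C.
  move=> x xm; have xw : x < w by lia.
  apply: (@force C x t.+2) => //.
  - by apply: A; lia.
  - by apply: adjU; lia.
  - by move=> p; left; apply: A; lia.
  - by move=> p; left; apply: A; lia.
  - by move=> _; right.
  - by move=> _; left; rewrite Vdn; apply: F1.
have F3 : full t.+3.
  move=> x xw; case: (ltnP x m.-1) => xm; first exact: B.
  exact: tailL.
by split => //; apply: Sweep.
Qed.


Lemma Block : (forall t, t < 2 * m -> V w.-1 t \in C) ->
  forall t, t < 2 * m -> full t.
Proof.
move=> Tl.
have TA : forall t x, t < 2 * m -> m.-1 <= x -> x < w -> V x t \in C.
  by move=> t x tm; apply: tailL; apply: Tl.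
have Q : forall j x t, x < w -> m.-1 <= x + j -> m.-1 - x <= t ->
    t + (m.-1 - x) < 2 * m -> V x t \in C.
  elim=> [|j IH] x t xw l1 l2 l3; first by apply: TA => //; lia.
  case: (leqP m.-1 (x + j)) => [le|lt]; first exact: IH.
  have x1w : x.+1 < w by lia.
  apply: (@force C x.+1 t) => //.
  - by apply: IH => //; lia.
  - by apply: adjL.
  - by move=> _; right.
  - by move=> p; left; apply: IH => //; lia.
  - by move=> p; left; apply: IH => //; lia.
  - move=> p; left; case: t l2 l3 => [|s] l2 l3; first lia.
    by rewrite Vdn; apply: IH => //; lia.
have R0 : full m.-1 by move=> x xw; apply: (Q m) => //; lia.
have R1 : full m by move=> x xw; apply: (Q m) => //; lia.
have Upr : forall r, r <= m.-1 -> full (m.-1 + r) /\ full (m + r).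
  elim=> [|r IH] rm; first by rewrite !addn0.
  have [F0 F1] := IH (ltnW rm).
  have e1 : m.-1 + r.+1 = (m.-1 + r).+1 by lia.
  have e2 : m + r.+1 = (m.-1 + r).+2 by lia.
  rewrite e1 e2; split; first by rewrite -e1; have -> : m.-1 + r.+1 = m + r by lia.
  apply: Up => //; first by have -> : (m.-1 + r).+1 = m + r by lia.
  by apply: Tl; lia.
have Dnr : forall r, r <= m.-1 -> full (m.-1 - r) /\ full (m - r).
  elim=> [|r IH] rm; first by rewrite !subn0.
  have [F0 F1] := IH (ltnW rm).
  split; last by have -> : m - r.+1 = m.-1 - r by lia.
  apply: Down.
  - by have -> : (m.-1 - r.+1).+1 = m.-1 - r by lia.
  - by have -> : (m.-1 - r.+1).+2 = m - r by lia.
  - by apply: Tl; lia.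
move=> t tm; case: (leqP m t) => le.
  have [_ F] := Upr (t - m) ltac:(lia).
  by have <- : m + (t - m) = t by lia.
have [F _] := Dnr (m.-1 - t) ltac:(lia).
by have <- : m.-1 - (m.-1 - t) = t by lia.
Qed.


Lemma Gap b g : g <= 2 * m -> full b -> full b.+1 -> full (b + g + 2) ->
  full (b + g + 3) -> forall i, 1 <= i <= g -> full (b.+1 + i).
Proof.
move=> gm Fb Fb1 FT FT1.
pose UT i := forall x, x + i <= m -> V x (b.+1 + i) \in C.
have UTp : forall i, UT i /\ UT i.+1.
  elim=> [|i [U0 U1]].
    split=> x xm; first by rewrite addn0; apply: Fb1; lia.
    by rewrite addn1; apply: (UpU Fb Fb1); lia.
  split => // x xm; have xw : x < w by lia.
  have -> : b.+1 + i.+2 = (b.+1 + i.+1).+1 by lia.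
  apply: (@force C x (b.+1 + i.+1)) => //.
  - by apply: U1; lia.
  - by apply: adjU; lia.
  - by move=> p; left; apply: U1; lia.
  - by move=> p; left; apply: U1; lia.
  - by move=> _; right.
  - move=> _; left; have -> : b.+1 + i.+1 = (b.+1 + i).+1 by lia.
    by rewrite Vdn; apply: U0; lia.
pose DT i := forall x s, x + i <= m -> s + i = b + g + 2 -> V x s \in C.
have DTp : forall i, DT i /\ DT i.+1.
  elim=> [|i [D0 D1]].
    split=> x s xm es; first by rewrite addn0 in es; rewrite es; apply: FT; lia.
    apply: (DownU (t := s)) => //; last lia.
    - by have -> : s.+1 = b + g + 2 by lia.
    - by have -> : s.+2 = b + g + 3 by lia.
  split => // x s xm es; have xw : x < w by lia.
  rewrite -(Vdn x s).
  apply: (@force C x s.+1) => //.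
  - by apply: (D1 x s.+1) => //; lia.
  - by apply: adjD; lia.
  - by move=> p; left; apply: (D1 x.-1 s.+1); lia.
  - by move=> p; left; apply: (D1 x.+1 s.+1); lia.
  - by move=> _; left; apply: (D0 x s.+2); lia.
  - by move=> _; right.
have C0 : forall i, 1 <= i <= g -> V 0 (b.+1 + i) \in C.
  move=> i ig; case: (leqP i m) => im.
    by have [U0 _] := UTp i; apply: U0.
  have [D0 _] := DTp (g.+1 - i); apply: D0; lia.
have CS : forall c x i, x <= c -> x < w -> 1 <= i <= g -> V x (b.+1 + i) \in C.
  elim=> [|c IH] x i xc xw ig; first by rewrite (_ : x = 0); [apply: C0 | lia].
  case: (leqP x c) => [le|lt]; first exact: IH.
  have -> : x = c.+1 by lia.
  have cw : c < w by lia.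
  apply: (@force C c (b.+1 + i)) => //.
  - exact: IH.
  - by apply: adjR; lia.
  - by move=> p; left; apply: IH => //; lia.
  - by move=> _; right.
  - move=> p; left; case: (leqP i.+1 g) => ig1.
      by rewrite -addnS; apply: IH => //; lia.
    by rewrite (_ : (b.+1 + i).+1 = b + g + 2); [apply: FT | lia].
  - move=> p; left; have -> : b.+1 + i = (b + i).+1 by lia.
    rewrite Vdn; case: (ltnP 1 i) => i1.
      by rewrite (_ : b + i = b.+1 + i.-1); [apply: IH => //; lia | lia].
    by rewrite (_ : b + i = b.+1); [apply: Fb1 | lia].
by move=> i ig x xw; apply: (CS x).
Qed.


Lemma AllFull : (forall t, t < h -> full t) -> C = setT.
Proof.
move=> F; apply/eqP; rewrite eqEsubset subsetT /=; apply/subsetP => p _.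
by case: (surjV p) => x [t [xw [th ->]]]; apply: F.
Qed.

End Closed.

Lemma Part1 : Z E <= h.
Proof.
pose S : {set 'I_w * 'I_h} := [set:: [seq V w.-1 t | t <- iota 0 h]].
apply: (@leq_trans #|S|).
  apply: Z_le; apply: closure_ok => C sub cl.
  have inS : forall t, t < h -> V w.-1 t \in C.
    move=> t th; apply: (subsetP sub); rewrite inE; apply: map_f.
    by rewrite mem_iota.
  have col : forall d, d < w -> forall d', d' <= d -> forall t, V (w.-1 - d') t \in C.
    elim=> [|d IH] dw d' dd t.
      have -> : d' = 0 by lia.
      by rewrite subn0 -Vmod; apply: inS; apply: ltn_pmod; lia.
    case: (leqP d' d) => [le|lt]; first by apply: IH => //; lia.
    have -> : w.-1 - d' = (w.-1 - d).-1 by lia.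
    apply: (@force C (w.-1 - d) t) => //.
    - lia.
    - by apply: (IH _ d); lia.
    - by apply: adjL; lia.
    - by move=> _; right.
    - move=> p; left; rewrite (_ : (w.-1 - d).+1 = w.-1 - d.-1); last lia.
      by apply: IH => //; lia.
    - by move=> _; left; apply: (IH _ d); lia.
    - by move=> _; left; apply: (IH _ d); lia.
  apply: AllFull => t th x xw.
  rewrite (_ : x = w.-1 - (w.-1 - x)); last lia.
  by apply: (col (w.-1)); lia.
by rewrite cardsE (leq_trans (card_size _)) // size_map size_iota.
Qed.


Lemma Part23 k : 2 * m + 2 * k <= h -> h - 2 * m - 2 * k <= 2 * m ->
  Z E <= 2 * m + k.
Proof.
move=> hk gk.
pose R := iota 0 (2 * m) ++ [seq (2 * m + 2 * i).+1 | i <- iota 0 k].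
pose S : {set 'I_w * 'I_h} := [set:: [seq V w.-1 t | t <- R]].
apply: (@leq_trans #|S|); last first.
  by rewrite cardsE (leq_trans (card_size _)) // size_map size_cat size_map !size_iota.
apply: Z_le; apply: closure_ok => C sub cl.
have inS : forall t, t \in R -> V w.-1 t \in C.
  by move=> t tR; apply: (subsetP sub); rewrite inE; apply: map_f.
have BL := Block cl (fun t tm => inS t ltac:(by rewrite mem_cat mem_iota tm)).
have Ext : forall j, j <= k -> forall t, t < 2 * m + 2 * j -> full C t.
  elim=> [|j IH] jk t tj; first by apply: BL; lia.
  case: (ltnP t (2 * m + 2 * j)) => [lt|ge]; first by apply: IH => //; lia.
  pose t0 := 2 * m + 2 * j - 2.
  have [F2 F3] : full C t0.+2 /\ full C t0.+3.
    apply: Step => //; try (apply: IH; lia).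
    apply: inS; rewrite mem_cat; apply/orP; right.
    rewrite (_ : t0.+3 = (2 * m + 2 * j).+1); last lia.
    by apply: map_f; rewrite mem_iota; lia.
  case: (ltnP t (2 * m + 2 * j).+1) => t1.
    by rewrite (_ : t = t0.+2); [exact: F2 | lia].
  by rewrite (_ : t = t0.+3); [exact: F3 | lia].
pose b := 2 * m + 2 * k - 2.
pose g := h - 2 * m - 2 * k.
have G := @Gap C cl b g ltac:(lia).
apply: AllFull => // t th.
case: (ltnP t (2 * m + 2 * k)) => tk; first by apply: (Ext k).
rewrite (_ : t = b.+1 + (t - b.+1)); last lia.
apply: G; try (apply: (Ext k); lia); last lia.
- rewrite (_ : b + g + 2 = 0 + h); last lia.
  by move=> x xw; rewrite Vh; apply: (Ext k) => //; lia.
- rewrite (_ : b + g + 3 = 1 + h); last lia.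
  by move=> x xw; rewrite Vh; apply: (Ext k) => //; lia.
Qed.

End Geo.

Theorem mainTheorem7 (w h m : nat) (U : {set 'I_w}) :
  2 <= w -> 3 <= h -> 1 <= m < w ->
  (U = [set i : 'I_w | i < m] \/ U = [set i : 'I_w | w - m <= i]) ->
  (h <= 2 * m -> Z (hprod (@path_rel w) U (@cycle_rel h)) <= h) /\
  (2 * m < h < 4 * m -> Z (hprod (@path_rel w) U (@cycle_rel h)) <= 2 * m) /\
  (4 * m < h -> Z (hprod (@path_rel w) U (@cycle_rel h)) <= (h + 1) %/ 2).
Proof.
move=> hw hh /andP [hm hmw] HU.
have [o Eo] : exists o, hprod (@path_rel w) U (@cycle_rel h) = @E w h m o.
  by case: HU => ->; [exists true | exists false].
rewrite Eo; split; first by move=> _; apply: Part1.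
split.
  move=> /andP [h1 h2].
  have := @Part23 w h m o hw hh hm hmw 0 ltac:(lia) ltac:(lia).
  by rewrite addn0.
move=> h1.
apply: (leq_trans (@Part23 w h m o hw hh hm hmw ((h - 4 * m).+1 %/ 2) _ _)); lia.
Qed.
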